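(* Let $\mathcal{F},G:\mathbb{R}^p\times\mathbb{R}^q\to\mathbb{R}$ satisfy the standing assumptions (A1) and (A2) with constants $L>0$ and $M<\infty$, and fix $\delta>0$ and $\xi\in(0,1)$. Suppose the learning-rate sequences $(\eta_w^{(t)})_{t\ge1}$, $(\eta_\alpha^{(t)})_{t\ge1}$ are positive and satisfy $$\sum_{t=1}^\infty\eta_\alpha^{(t)}<\infty,\qquad \sum_{t=1}^\infty\eta_w^{(t)}=\infty,\qquad \sum_{t=1}^\infty\big(\eta_w^{(t)}\big)^2<\infty,$$ $$\eta_\alpha^{(t)}<\eta_w^{(t)}<\min\Big(\frac{1-\xi}{L},1\Big)\quad\text{for all }t\ge1.$$ Let $(w^t,\alpha^t)_{t\ge1}$ be generated by the EBOMLC iteration from an arbitrary initial point. Then $$\lim_{t\to\infty}\big\|\nabla_w\mathcal{F}(w^t,\alpha^t)\big\|=0.$$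
   Context: Notation: $\|\cdot\|$ is the Euclidean norm; for a function $\Phi(w,\alpha)$ of $(w,\alpha)\in\mathbb{R}^p\times\mathbb{R}^q$, $\nabla\Phi=(\nabla_w\Phi,\nabla_\alpha\Phi)$ denotes the full gradient in the joint variable. Standing assumptions. (A1) $\mathcal{F}$ and $G$ are differentiable on $\mathbb{R}^p\times\mathbb{R}^q$ and $\nabla\mathcal{F}$, $\nabla G$ are $L$-Lipschitz with respect to the joint variable $(w,\alpha)$, for some $L>0$. (A2) There is a finite $M$ such that for all $(w,\alpha)$: $|\mathcal{F}(w,\alpha)|\le M$, $|G(w,\alpha)|\le M$, $\|\nabla\mathcal{F}(w,\alpha)\|\le M$, $\|\nabla G(w,\alpha)\|\le M$. EBOMLC iteration. Fix constants $\delta>0$, $\xi\in(0,1)$ and positive learning rates $\eta_w^{(t)},\eta_\alpha^{(t)}$. Given $(w^t,\alpha^t)$, set $w^t_{(1)}=w^t-\eta_w^{(t)}\nabla_wG(w^t,\alpha^t)$ and define $\mathcal{Q}_t(w,\alpha)=G(w,\alpha)-G(w^t_{(1)},\alpha)$, where $w^t_{(1)}$ is treated as a constant when differentiating, so that $$\nabla\mathcal{Q}(w^t,\alpha^t):=\nabla G(w^t,\alpha^t)-\nabla G(w^t_{(1)},\alpha^t),$$ with components $\nabla_w\mathcal{Q},\nabla_\alpha\mathcal{Q}$. Define $$\bar\beta_t=\max\Big(\delta-\frac{\nabla_w\mathcal{F}(w^t,\alpha^t)^T\nabla_w\mathcal{Q}(w^t,\alpha^t)}{\|\nabla\mathcal{Q}(w^t,\alpha^t)\|^2},\,0\Big)$$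 if $\nabla\mathcal{Q}(w^t,\alpha^t)\neq0$, and $\bar\beta_t=0$ otherwise. Then update $$w^{t+1}=w^t-\eta_w^{(t)}\big(\nabla_w\mathcal{F}(w^t,\alpha^t)+\xi\bar\beta_t\nabla_w\mathcal{Q}(w^t,\alpha^t)\big),$$ $$\alpha^{t+1}=\alpha^t-\eta_\alpha^{(t)}\big(\nabla_\alpha\mathcal{F}(w^t,\alpha^t)+\xi\bar\beta_t\nabla_\alpha\mathcal{Q}(w^t,\alpha^t)\big).$$ *)

(* Defs.v *)
(* Points of R^p x R^q are row vectors 'rV[R]_(p+q);
   w = lsubmx z, alpha = rsubmx z. *)
From HB Require Import structures.
From mathcomp Require Import all_boot all_order all_algebra.
From mathcomp Require Import all_classical all_reals all_analysis.
Set Implicit Arguments. Unset Strict Implicit. Unset Printing Implicit Defensive.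
Import Order.TTheory GRing.Theory Num.Theory.
Import numFieldNormedType.Exports.
Local Open Scope ring_scope.

Section Defs.
Variable R : realType.

Definition dotv n (u v : 'rV[R]_n) : R := \sum_(i < n) u ord0 i * v ord0 i.
Definition enorm n (u : 'rV[R]_n) : R := Num.sqrt (dotv u u).

Definition grad n (f : 'rV[R]_n -> R) (x : 'rV[R]_n) : 'rV[R]_n :=
  \row_(i < n) ('D_(delta_mx ord0 i) f x).

Variables p q : nat.
Notation pt := ('rV[R]_(p + q)).

Definition joint (w : 'rV[R]_p) (a : 'rV[R]_q) : pt := row_mx w a.
Definition gradw (f : pt -> R) (z : pt) : 'rV[R]_p := lsubmx (grad f z).
Definition grada (f : pt -> R) (z : pt) : 'rV[R]_q := rsubmx (grad f z).

Definition A1 (L : R) (f : pt -> R) : Prop :=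
  (forall z, differentiable f z) /\
  (forall z1 z2, enorm (grad f z1 - grad f z2) <= L * enorm (z1 - z2)).
Definition A2 (M : R) (f : pt -> R) : Prop :=
  forall z, `|f z| <= M /\ enorm (grad f z) <= M.

Definition w1 (G : pt -> R) (etaw : R) (z : pt) : 'rV[R]_p :=
  lsubmx z - etaw *: gradw G z.
Definition gradQ (G : pt -> R) (etaw : R) (z : pt) : pt :=
  grad G z - grad G (joint (w1 G etaw z) (rsubmx z)).
Definition betabar (F G : pt -> R) (delta etaw : R) (z : pt) : R :=
  let gQ := gradQ G etaw z in
  if gQ != 0 then
    Num.max (delta - dotv (gradw F z) (lsubmx gQ) / (enorm gQ ^+ 2)) 0
  else 0.
Definition ebomlc_step (F G : pt -> R) (delta xi etaw etaa : R) (z : pt) : pt :=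
  let gQ := gradQ G etaw z in
  let b := betabar F G delta etaw z in
  joint (lsubmx z - etaw *: (gradw F z + (xi * b) *: lsubmx gQ))
        (rsubmx z - etaa *: (grada F z + (xi * b) *: rsubmx gQ)).

End Defs.

(* Main.v *)
Require Import Defs.
From HB Require Import structures.
From mathcomp Require Import all_boot all_order all_algebra.
From mathcomp Require Import all_classical all_reals all_analysis.
From mathcomp Require Import ring lra.
Import Order.TTheory GRing.Theory Num.Theory.
Import numFieldNormedType.Exports.
Local Open Scope ring_scope.
Set Implicit Arguments. Unset Strict Implicit. Unset Printing Implicit Defensive.

Section DotLemmas.
Variable R : realType.
Variable n : nat.
Implicit Types u v w : 'rV[R]_n.

Lemma dotvC u v : dotv u v = dotv v u.
Proof. by apply: eq_bigr => i _; rewrite mulrC. Qed.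

Lemma dotvDl u v w : dotv (u + v) w = dotv u w + dotv v w.
Proof. by rewrite /dotv -big_split; apply: eq_bigr => i _; rewrite mxE mulrDl. Qed.

Lemma dotvZl a u v : dotv (a *: u) v = a * dotv u v.
Proof. by rewrite /dotv mulr_sumr; apply: eq_bigr => i _; rewrite mxE mulrA. Qed.

Lemma dotvNl u v : dotv (- u) v = - dotv u v.
Proof. by rewrite -scaleN1r dotvZl mulN1r. Qed.

Lemma dotvBl u v w : dotv (u - v) w = dotv u w - dotv v w.
Proof. by rewrite dotvDl dotvNl. Qed.

Lemma dotvDr u v w : dotv w (u + v) = dotv w u + dotv w v.
Proof. by rewrite dotvC dotvDl !(dotvC w). Qed.

Lemma dotvZr a u v : dotv v (a *: u) = a * dotv v u.
Proof. by rewrite dotvC dotvZl dotvC. Qed.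

Lemma dotvNr u v : dotv v (- u) = - dotv v u.
Proof. by rewrite dotvC dotvNl dotvC. Qed.

Lemma dotvBr u v w : dotv w (u - v) = dotv w u - dotv w v.
Proof. by rewrite dotvDr dotvNr. Qed.

Lemma dotv_ge0 u : 0 <= dotv u u.
Proof. by apply: sumr_ge0 => i _; rewrite -expr2 sqr_ge0. Qed.

Lemma dotv0l u : dotv 0 u = 0.
Proof. by rewrite /dotv big1 // => i _; rewrite mxE mul0r. Qed.

Lemma dotv_eq0 u : dotv u u = 0 -> u = 0.
Proof.
move=> h; apply/matrixP => i j; rewrite mxE (ord1 i).
have nn : forall k : 'I_n, predT k -> 0 <= u ord0 k * u ord0 k.
  by move=> k _; rewrite -expr2 sqr_ge0.
have := @psumr_eq0P R _ predT (fun i => u ord0 i * u ord0 i) nn h j isT.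
by move=> /eqP; rewrite mulf_eq0 orbb => /eqP.
Qed.

Lemma enorm_ge0 u : 0 <= enorm u.
Proof. exact: sqrtr_ge0. Qed.

Lemma enorm_sq u : enorm u ^+ 2 = dotv u u.
Proof. by rewrite sqr_sqrtr // dotv_ge0. Qed.

Lemma enorm0 : enorm (0 : 'rV[R]_n) = 0.
Proof. by rewrite /enorm dotv0l sqrtr0. Qed.

Lemma enorm_eq0 u : enorm u = 0 -> u = 0.
Proof. by move=> h; apply: dotv_eq0; rewrite -enorm_sq h expr0n. Qed.

Lemma enormZ a u : enorm (a *: u) = `|a| * enorm u.
Proof.
rewrite /enorm dotvZl dotvZr mulrA -expr2 sqrtrM ?sqr_ge0 //.
by rewrite sqrtr_sqr.
Qed.

Lemma enormN u : enorm (- u) = enorm u.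
Proof. by rewrite -scaleN1r enormZ normrN1 mul1r. Qed.

Lemma sqrt_le_sq (x y : R) : 0 <= y -> x <= y ^+ 2 -> Num.sqrt x <= y.
Proof.
move=> y0 h; have := ler_wsqrtr h; rewrite sqrtr_sqr ger0_norm //.
Qed.

Lemma CS u v : `|dotv u v| <= enorm u * enorm v.
Proof.
have [B0|Bpos] := eqVneq (dotv v v) 0.
  have -> : v = 0 by exact: dotv_eq0.
  by rewrite dotvC dotv0l normr0 mulr_ge0 // enorm_ge0.
have Bp : 0 < dotv v v by rewrite lt_def Bpos dotv_ge0.
set A := dotv u u; set B := dotv v v; set C := dotv u v.
have h := dotv_ge0 (B *: u - C *: v).
rewrite !(dotvBl, dotvBr, dotvZl, dotvZr) -/A -/B -/C (dotvC v u) -/C in h.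
have hC : C ^+ 2 <= A * B.
  have : 0 <= B * (A * B - C ^+ 2) by nra.
  by rewrite pmulr_rge0 // subr_ge0.
rewrite /enorm -sqrtrM ?dotv_ge0 // -sqrtr_sqr.
exact: ler_wsqrtr.
Qed.

Lemma enormD u v : enorm (u + v) <= enorm u + enorm v.
Proof.
apply: sqrt_le_sq; first by rewrite addr_ge0 ?enorm_ge0.
rewrite dotvDl !dotvDr (dotvC v u) sqrrD !enorm_sq.
have := CS u v; have := ler_norm (dotv u v); lra.
Qed.

Lemma enormB_rev u v : `|enorm u - enorm v| <= enorm (u - v).
Proof.
have h1 := enormD (u - v) v; have h2 := enormD (v - u) u.
rewrite subrK in h1; rewrite subrK in h2.
have e : enorm (v - u) = enorm (u - v) by rewrite -enormN opprB.
rewrite e in h2.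
by rewrite ler_norml; apply/andP; split; lra.
Qed.

End DotLemmas.

Section RowLemmas.
Variable R : realType.
Variables n1 n2 : nat.

Lemma dotv_row (a c : 'rV[R]_n1) (b d : 'rV[R]_n2) :
  dotv (row_mx a b) (row_mx c d) = dotv a c + dotv b d.
Proof.
rewrite /dotv big_split_ord /=; congr (_ + _); apply: eq_bigr => i _;
  by rewrite ?row_mxEl ?row_mxEr.
Qed.

Lemma enorm_row_sq (a : 'rV[R]_n1) (b : 'rV[R]_n2) :
  enorm (row_mx a b) ^+ 2 = enorm a ^+ 2 + enorm b ^+ 2.
Proof. by rewrite !enorm_sq dotv_row. Qed.

Lemma enorm_row_le (a : 'rV[R]_n1) (b : 'rV[R]_n2) :
  enorm (row_mx a b) <= enorm a + enorm b.
Proof.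
have -> : row_mx a b = row_mx a 0 + row_mx 0 b by rewrite add_row_mx addr0 add0r.
apply: le_trans; first exact: enormD.
apply: lerD.
  by rewrite /enorm dotv_row dotv0l addr0.
by rewrite /enorm dotv_row dotv0l add0r.
Qed.

Lemma enorm_lsub (u : 'rV[R]_(n1 + n2)) : enorm (lsubmx u) <= enorm u.
Proof.
rewrite -{2}(hsubmxK u) /enorm dotv_row; apply: ler_wsqrtr.
by rewrite lerDl dotv_ge0.
Qed.

Lemma enorm_rsub (u : 'rV[R]_(n1 + n2)) : enorm (rsubmx u) <= enorm u.
Proof.
rewrite -{2}(hsubmxK u) /enorm dotv_row; apply: ler_wsqrtr.
by rewrite lerDr dotv_ge0.
Qed.

Lemma enorm_row0 (a : 'rV[R]_n1) : enorm (row_mx a (0 : 'rV[R]_n2)) = enorm a.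
Proof. by rewrite /enorm dotv_row dotv0l addr0. Qed.

End RowLemmas.

Section Grad.
Variable R : realType.
Variable n : nat.

Lemma derive_dot (f : 'rV[R]_n -> R) x h : differentiable f x ->
  'D_h f x = dotv (grad f x) h.
Proof.
move=> df; rewrite deriveE // {1}(row_sum_delta h) linear_sum /dotv.
apply: eq_bigr => i _; rewrite linearZ /= mxE -deriveE //.
by rewrite /GRing.scale /= mulrC.
Qed.

Lemma descent (L : R) (f : 'rV[R]_n -> R) z h : 0 < L ->
  (forall z, differentiable f z) ->
  (forall z1 z2, enorm (grad f z1 - grad f z2) <= L * enorm (z1 - z2)) ->
  f (h + z) <= f z + dotv (grad f z) h + L * enorm h ^+ 2.
Proof.
move=> L0 df lip.
pose phi := fun s : R => f (s *: h + z).
have hE (s0 : R) : (fun t : R => t^-1 *: ((phi \o shift s0) (t *: (1:R)) - phi s0)) =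
   (fun t : R => t^-1 *: ((f \o shift (s0 *: h + z)) (t *: h) - f (s0 *: h + z))).
  apply: funext => t /=; rewrite /phi /= [_%:A]mulr1 scalerDl addrA.
  reflexivity.
have der (r : R) : is_derive r (1:R) phi (dotv (grad f (r *: h + z)) h).
  apply: DeriveDef.
    by rewrite /derivable hE; apply: diff_derivable.
  by rewrite /derive hE -/(derive f (r *: h + z) h) derive_dot.
have cont : {within `[0, 1], continuous phi}%classic.
  apply: derivable_within_continuous => x _.
  have dx := der x; exact: ex_derive.
have [c c01 eq] := @MVT R phi (fun s => dotv (grad f (s *: h + z)) h) 0 1 ltr01
  (fun x _ => der x) cont.
move: eq; rewrite /phi scale1r scale0r add0r subr0 mulr1 => eq.
have c0 : 0 < c by rewrite (itvP c01).
have c1 : c < 1 by rewrite (itvP c01).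
have key : dotv (grad f (c *: h + z)) h - dotv (grad f z) h <= L * enorm h ^+ 2.
  rewrite -dotvBl.
  have h1 := CS (grad f (c *: h + z) - grad f z) h.
  have h2 := lip (c *: h + z) z.
  rewrite addrK enormZ (ger0_norm (ltW c0)) in h2.
  have h3 := ler_norm (dotv (grad f (c *: h + z) - grad f z) h).
  have e0 := enorm_ge0 h.
  have g0 := enorm_ge0 (grad f (c *: h + z) - grad f z).
  have h4 : enorm (grad f (c *: h + z) - grad f z) * enorm h <= L * c * enorm h * enorm h.
    by apply: ler_wpM2r => //; rewrite -mulrA.
  have Lee : 0 <= L * (enorm h * enorm h) by apply: mulr_ge0; [exact: ltW | exact: mulr_ge0].
  have h5 : L * c * enorm h * enorm h <= L * enorm h ^+ 2.
    rewrite expr2 -!mulrA mulrCA [X in _ <= X]mulrA.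
    have : c * (L * (enorm h * enorm h)) <= 1 * (L * (enorm h * enorm h)).
      by apply: ler_wpM2r => //; apply: ltW.
    by rewrite mul1r -mulrA.
  lra.
lra.
Qed.

End Grad.

Lemma beta_facts (R : realType) (N s g2 M delta xi : R) :
  0 < N -> 0 < delta -> 0 < xi -> xi < 1 -> 0 <= M ->
  s ^+ 2 <= g2 * N ^+ 2 -> `|s| <= M * N ->
  let b := Num.max (delta - s / N ^+ 2) 0 in
  [/\ 0 <= b, b * N <= delta * N + M & - xi * g2 - delta * `|s| <= xi * b * s].
Proof.
move=> N0 d0 x0 x1 M0 hs1 hs2 b.
have N2 : 0 < N ^+ 2 by rewrite exprn_gt0.
set u := s / N ^+ 2.
have su : s = u * N ^+ 2 by rewrite /u divfK // gt_eqF.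
have as0 := normr_ge0 s.
have sle := ler_norm s; have sge : - s <= `|s| by rewrite -normrN ler_norm.
rewrite /b; case: (leP 0 (delta - u)) => h.
  split => //.
  - have : - s <= M * N by lra.
    rewrite su => h2.
    have e1 : N * (- u * N) = - (u * N ^+ 2) by ring.
    have : N * (- u * N) <= N * M by rewrite e1 (mulrC N M).
    rewrite ler_pM2l // => h3; nra.
  - have hu : u ^+ 2 * N ^+ 2 <= g2.
      move: hs1; rewrite su => hs1.
      have e1 : N ^+ 2 * (u ^+ 2 * N ^+ 2) = (u * N ^+ 2) ^+ 2 by ring.
      have : N ^+ 2 * (u ^+ 2 * N ^+ 2) <= N ^+ 2 * g2 by rewrite e1 (mulrC (N ^+ 2) g2).
      by rewrite ler_pM2l.
    have e : xi * (delta - u) * s = xi * delta * s - xi * (u ^+ 2 * N ^+ 2) by rewrite su; ring.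
    rewrite e.
    have : - (xi * delta * s) <= delta * `|s|.
      have a1 : 0 <= xi * (`|s| + s) by apply: mulr_ge0; lra.
      have a2 : 0 <= (1 - xi) * `|s| by apply: mulr_ge0; lra.
      have a3 : 0 <= delta * (`|s| + xi * s) by apply: mulr_ge0; nra.
      nra.
    have : xi * (u ^+ 2 * N ^+ 2) <= xi * g2 by rewrite ler_pM2l.
    lra.
split => //.
  by rewrite mul0r; apply: addr_ge0 => //; apply: mulr_ge0; apply: ltW.
rewrite mulr0 mul0r. have : 0 <= xi * g2.
  apply: mulr_ge0; first exact: ltW.
  have : 0 <= g2 * N ^+ 2 by apply: le_trans hs1; apply: sqr_ge0.
  by rewrite pmulr_lge0.
have : 0 <= delta * `|s| by apply: mulr_ge0 => //; apply: ltW.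
lra.
Qed.


Section Step.
Variable R : realType.
Variables p q : nat.
Variables (F G : 'rV[R]_(p + q) -> R) (L M delta xi : R).

Lemma step_bounds ew ea z :
  0 < L -> A1 L F -> A1 L G -> A2 M F -> A2 M G ->
  0 < delta -> 0 < xi -> xi < 1 -> 0 < ea -> ea < ew ->
  let B := 2 * M * delta + M in let D := M + B in
  (enorm (ebomlc_step F G delta xi ew ea z - z) <= ew * (2 * D)) /\
  (F (ebomlc_step F G delta xi ew ea z) <=
    F z - ew * (1 - xi) * enorm (gradw F z) ^+ 2
    + ew ^+ 2 * (delta * L * M ^+ 2 + 4 * L * D ^+ 2) + ea * (M * D)).
Proof.
move=> L0 [dF lF] [dG lG] bF bG d0 x0 x1 ea0 eaw B D.
have ew0 : 0 < ew by apply: lt_trans eaw.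
have M0 : 0 <= M by apply: le_trans (bF z).1.
set gQ := gradQ G ew z.
have hQ1 : enorm gQ <= L * M * ew.
  rewrite /gQ /gradQ; apply: le_trans (lG _ _) _.
  have -> : z - joint (w1 G ew z) (rsubmx z) = row_mx (ew *: gradw G z) 0.
    rewrite /joint /w1 -{1}(hsubmxK z) opp_row_mx add_row_mx subrr.
    by rewrite opprB addrC subrK.
  rewrite enorm_row0 enormZ (ger0_norm (ltW ew0)) -[X in _ <= X]mulrA ler_pM2l //.
  rewrite [X in _ <= X]mulrC ler_pM2l //; apply: le_trans (enorm_lsub _) (bG z).2.
have hQ2 : enorm gQ <= 2 * M.
  rewrite /gQ /gradQ; apply: le_trans; first exact: enormD.
  by rewrite enormN mulr2n mulrDl mul1r lerD ?(bG _).2.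
have gwM : enorm (gradw F z) <= M by apply: le_trans (enorm_lsub _) (bF z).2.
have gaM : enorm (grada F z) <= M by apply: le_trans (enorm_rsub _) (bF z).2.
set s := dotv (gradw F z) (lsubmx gQ).
have sN : `|s| <= enorm (gradw F z) * enorm gQ.
  apply: le_trans (CS _ _) _; apply: ler_wpM2l; first exact: enorm_ge0.
  exact: enorm_lsub.
have sM : `|s| <= M * (L * M * ew).
  apply: le_trans sN _; apply: ler_pM => //; exact: enorm_ge0.
set b := betabar F G delta ew z.
have hb : [/\ 0 <= b, b * enorm gQ <= B &
    - xi * enorm (gradw F z) ^+ 2 - delta * `|s| <= xi * b * s].
  rewrite /b /betabar -/gQ; case: ifPn => [nz|_]; last first.
    rewrite mul0r mulr0 mul0r; split => //.
      rewrite /B; nra.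
    have : 0 <= xi * enorm (gradw F z) ^+ 2 by apply: mulr_ge0; [exact: ltW|exact: sqr_ge0].
    have : 0 <= delta * `|s| by apply: mulr_ge0 => //; exact: ltW.
    lra.
  have N0 : 0 < enorm gQ.
    rewrite lt_def enorm_ge0 andbT; apply/eqP => h; move/eqP: nz; apply.
    exact: enorm_eq0.
  have hs1 : s ^+ 2 <= enorm (gradw F z) ^+ 2 * enorm gQ ^+ 2.
    have e : `|s| ^+ 2 = s ^+ 2 by rewrite -normrX ger0_norm // sqr_ge0.
    rewrite -e; have := normr_ge0 s; nra.
  have hs2 : `|s| <= M * enorm gQ.
    apply: le_trans sN _; apply: ler_wpM2r => //; exact: enorm_ge0.
  have [h1 h2 h3] := beta_facts N0 d0 x0 x1 M0 hs1 hs2.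
  split => //; apply: le_trans h2 _; rewrite /B lerD2r.
  have := ltW d0; nra.
have [b0 bN hbs] := hb.
have xb0 : 0 <= xi * b by apply: mulr_ge0 => //; exact: ltW.
have xbN : xi * b * enorm gQ <= B.
  apply: le_trans bN; rewrite -mulrA; have := enorm_ge0 gQ.
  have : 0 <= b * enorm gQ by apply: mulr_ge0 => //; exact: enorm_ge0.
  nra.
set dw := gradw F z + (xi * b) *: lsubmx gQ.
set da := grada F z + (xi * b) *: rsubmx gQ.
have ndw : enorm dw <= D.
  apply: le_trans; first exact: enormD.
  rewrite enormZ ger0_norm //; apply: lerD => //; apply: le_trans xbN.
  by apply: ler_wpM2l => //; exact: enorm_lsub.
have nda : enorm da <= D.
  apply: le_trans; first exact: enormD.
  rewrite enormZ ger0_norm //; apply: lerD => //; apply: le_trans xbN.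
  by apply: ler_wpM2l => //; exact: enorm_rsub.
have hstep : ebomlc_step F G delta xi ew ea z - z = row_mx (- (ew *: dw)) (- (ea *: da)).
  rewrite /ebomlc_step -/gQ -/b -/dw -/da /joint -{3}(hsubmxK z) opp_row_mx add_row_mx.
  by rewrite !(addrC (lsubmx z)) !(addrC (rsubmx z)) !addrK.
have D0 : 0 <= D by apply: le_trans ndw; exact: enorm_ge0.
have S1 : enorm (ebomlc_step F G delta xi ew ea z - z) <= ew * (2 * D).
  rewrite hstep; apply: le_trans; first exact: enorm_row_le.
  rewrite !enormN !enormZ (ger0_norm (ltW ew0)) (ger0_norm (ltW ea0)).
  have : ea * enorm da <= ew * D.
    apply: le_trans (ler_wpM2l (ltW ea0) nda) _; apply: ler_wpM2r => //; exact: ltW.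
  have : ew * enorm dw <= ew * D by apply: ler_wpM2l => //; exact: ltW.
  lra.
split => //.
set h := ebomlc_step F G delta xi ew ea z - z.
have -> : ebomlc_step F G delta xi ew ea z = h + z by rewrite /h subrK.
apply: le_trans (descent z h L0 dF lF) _.
have edot : dotv (grad F z) h = - (ew * (enorm (gradw F z) ^+ 2 + xi * b * s))
                                - ea * dotv (grada F z) da.
  rewrite /h hstep -[grad F z]hsubmxK dotv_row !dotvNr !dotvZr -/(gradw F z) -/(grada F z).
  rewrite /dw dotvDr dotvZr -/s enorm_sq.
  reflexivity.
rewrite edot.
have e1 : ew * (- xi * enorm (gradw F z) ^+ 2 - delta * `|s|) <= ew * (xi * b * s).
  by apply: ler_wpM2l => //; exact: ltW.
have e2 : ew * (delta * `|s|) <= ew * (delta * (M * (L * M * ew))).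
  by apply: ler_wpM2l; [exact: ltW|apply: ler_wpM2l => //; exact: ltW].
have e3 : - (ea * dotv (grada F z) da) <= ea * (M * D).
  rewrite -mulrN; apply: ler_wpM2l; first exact: ltW.
  apply: (@le_trans _ _ `|dotv (grada F z) da|); first by rewrite -normrN ler_norm.
  apply: le_trans (CS _ _) _; apply: ler_pM => //; exact: enorm_ge0.
have e4 : L * enorm h ^+ 2 <= L * (ew * (2 * D)) ^+ 2.
  apply: ler_wpM2l; first exact: ltW.
  have := enorm_ge0 h; nra.
have := ltW ew0. nra.
Qed.
End Step.

Local Open Scope classical_set_scope.
Local Open Scope ring_scope.

Section SeqLemma.
Variable R : realType.

Lemma sum_ge0_from (f : nat -> R) m n : (1 <= m)%N ->
  (forall t, (1 <= t)%N -> 0 <= f t) -> 0 <= \sum_(m <= t < n) f t.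
Proof.
move=> m1 hf; rewrite big_nat_cond; apply: sumr_ge0 => i /andP [/andP [hm _] _].
by apply: hf; apply: leq_trans hm.
Qed.

Lemma seq_lemma (a b : nat -> R) (K C : R) :
  0 < K ->
  (forall t, (1 <= t)%N -> 0 < a t) ->
  (forall t, 0 <= b t) ->
  (fun n => \sum_(1 <= t < n) a t) @ \oo --> +oo ->
  (forall n, \sum_(1 <= t < n) a t * b t ^+ 2 <= C) ->
  (forall t, (1 <= t)%N -> `|b t.+1 - b t| <= K * a t) ->
  b @ \oo --> 0.
Proof.
move=> K0 a0 b0 adiv Sb lipb.
pose S n := \sum_(1 <= t < n) a t * b t ^+ 2.
have tge0 t : (1 <= t)%N -> 0 <= a t * b t ^+ 2.
  by move=> t1; apply: mulr_ge0; [exact: ltW (a0 _ t1)|exact: sqr_ge0].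
have Ssplit m n : (1 <= m)%N -> (m <= n)%N ->
    S n = S m + \sum_(m <= t < n) a t * b t ^+ 2.
  by move=> m1 mn; rewrite /S (@big_cat_nat _ _ _ m)...
have Snd : {homo S : n m / (n <= m)%N >-> n <= m}.
  move=> m n mn; case: m mn => [|m] mn.
    by rewrite /S big_geq // sum_ge0_from.
  rewrite (Ssplit m.+1 n) // lerDl; exact: sum_ge0_from.
have Scvg : cvgn S.
  apply: nondecreasing_is_cvgn => //; exists C => _ [n _ <-]; exact: Sb.
have Sle n : S n <= limn S by apply: nondecreasing_cvgn_le.
apply/cvgrPdist_le => e e0.
pose tau := e ^+ 3 / (16 * K).
have tau0 : 0 < tau by rewrite divr_gt0 ?exprn_gt0 // mulr_gt0.
have := (cvgrPdist_lt _ _).1 Scvg tau tau0.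
case=> N0 _ HN0.
exists (maxn N0 1) => // m /=; rewrite geq_max => /andP [N0m m1].
rewrite sub0r normrN ger0_norm //.
case: (leP (b m) e) => // hbm; exfalso.
have hl : limn S - S m < tau.
  have := HN0 m N0m; rewrite /= ger0_norm //; rewrite subr_ge0 //.
have tail k : \sum_(m <= t < (m + k)%N) a t * b t ^+ 2 <= tau.
  have := Sle (m + k)%N; rewrite (Ssplit m (m + k)%N) ?leq_addr //; lra.
pose A k := \sum_(m <= t < (m + k)%N) a t.
have tele k : b m - K * A k <= b (m + k)%N.
  elim: k => [|k IH]; first by rewrite /A addn0 big_geq // mulr0 subr0.
  rewrite /A addnS big_nat_recr ?leq_addr //= -/(A k).
  have := lipb (m + k)%N (leq_trans m1 (leq_addr _ _)).
  rewrite ler_norml => /andP [h1 _]; lra.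
have scale k : (forall j, (j < k)%N -> e / 2 <= b (m + j)%N) ->
    A k * (e ^+ 2 / 4) <= \sum_(m <= t < (m + k)%N) a t * b t ^+ 2.
  elim: k => [|k IH] hk; first by rewrite /A addn0 !big_geq // mul0r.
  rewrite /A addnS !big_nat_recr ?leq_addr //= -/(A k) mulrDl.
  apply: lerD; first by apply: IH => j jk; apply: hk; apply: ltnW.
  have bk := hk k (ltnSn k).
  have ak := ltW (a0 (m + k)%N (leq_trans m1 (leq_addr _ _))).
  apply: ler_wpM2l => //.
  have e2 : e ^+ 2 / 4 = (e / 2) ^+ 2 by field.
  rewrite e2; apply: lerXn2r => //; rewrite nnegrE ?divr_ge0 //; exact: ltW.
have half k : forall j, (j <= k)%N -> e / 2 <= b (m + j)%N.
  elim: k => [|k IH] j.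
    rewrite leqn0 => /eqP ->; rewrite addn0; lra.
  rewrite leq_eqVlt => /orP [/eqP ->|]; last exact: IH.
  have hA := scale k.+1 (fun j jk => IH j jk).
  have := tail k.+1; have := tele k.+1.
  have : 0 <= A k.+1 by rewrite /A; apply: sum_ge0_from => // t t1; exact: ltW (a0 t t1).
  move=> A0 h1 h2.
  have hAt : A k.+1 * (e ^+ 2 / 4) <= tau by lra.
  have : K * A k.+1 <= e / 4.
    have c0 : 0 < e ^+ 2 / 4 by rewrite divr_gt0 // exprn_gt0.
    rewrite -(ler_pM2r c0).
    have -> : e / 4 * (e ^+ 2 / 4) = K * tau.
      rewrite /tau; field; rewrite gt_eqF //.
    by rewrite -mulrA; apply: ler_wpM2l => //; exact: ltW.
  lra.
have c0 : 0 < e ^+ 2 / 4 by rewrite divr_gt0 // exprn_gt0.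
have Abnd k : A k <= tau / (e ^+ 2 / 4).
  rewrite ler_pdivlMr //; apply: le_trans (tail k).
  by apply: scale => j jk; apply: (half k); apply: ltnW.
move/cvgryPge: adiv => /(_ (\sum_(1 <= t < m) a t + tau / (e ^+ 2 / 4) + 1)).
case=> n0 _ Hn0.
have := Hn0 (maxn n0 m) (leq_maxl _ _) => /=.
rewrite -(subnKC (leq_maxr n0 m)) [X in _ <= X](@big_cat_nat _ _ _ m) ?leq_addr //=.
have := Abnd (maxn n0 m - m)%N; rewrite /A; lra.
Qed.

End SeqLemma.

Lemma ps_le_lim (R : realType) (f : nat -> R) :
  (forall t, (1 <= t)%N -> 0 <= f t) ->
  cvgn (fun n => \sum_(1 <= t < n) f t) ->
  forall n, \sum_(1 <= t < n) f t <= limn (fun n => \sum_(1 <= t < n) f t).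
Proof.
move=> f0 cf n; apply: nondecreasing_cvgn_le => // i j ij.
case: i ij => [|i] ij; first by rewrite big_geq // sum_ge0_from.
rewrite (@big_cat_nat _ _ _ i.+1 1 j) //= lerDl; exact: sum_ge0_from.
Qed.

Unset Implicit Arguments.
Theorem theorem2 (R : realType) (p q : nat)
  (F G : 'rV[R]_(p + q) -> R) (L M delta xi : R)
  (etaw etaa : nat -> R) (z : nat -> 'rV[R]_(p + q)) :
  0 < L ->
  A1 L F -> A1 L G -> A2 M F -> A2 M G ->
  0 < delta -> 0 < xi -> xi < 1 ->
  (forall t, (1 <= t)%N -> 0 < etaa t) ->
  (forall t, (1 <= t)%N -> 0 < etaw t) ->
  cvg ([sequence \sum_(1 <= t < n) etaa t]_n @ \oo) ->
  [sequence \sum_(1 <= t < n) etaw t]_n @ \oo --> +oo ->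
  cvg ([sequence \sum_(1 <= t < n) etaw t ^+ 2]_n @ \oo) ->
  (forall t, (1 <= t)%N ->
     etaa t < etaw t /\ etaw t < Num.min ((1 - xi) / L) 1) ->
  (forall t, (1 <= t)%N ->
     z t.+1 = ebomlc_step F G delta xi (etaw t) (etaa t) (z t)) ->
  (fun t => enorm (gradw F (z t))) @ \oo --> (0 : R).
Proof.
move=> L0 hF hG bF bG d0 x0 x1 ea0 ew0 cA dW cW2 hlt hz.
have M0 : 0 <= M by apply: le_trans (bF (z 0%N)).1.
pose B := 2 * M * delta + M; pose D := M + B.
have D0 : 0 <= D by rewrite /D /B; nra.
pose K2 := delta * L * M ^+ 2 + 4 * L * D ^+ 2; pose K3 := M * D.
have hs t : (1 <= t)%N ->
  (enorm (z t.+1 - z t) <= etaw t * (2 * D)) /\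
  (F (z t.+1) <= F (z t) - etaw t * (1 - xi) * enorm (gradw F (z t)) ^+ 2
    + etaw t ^+ 2 * K2 + etaa t * K3).
  move=> t1; rewrite hz //.
  exact: (step_bounds (z t) L0 hF hG bF bG d0 x0 x1 (ea0 t t1) (hlt t t1).1).
pose WA := limn (fun n => \sum_(1 <= t < n) etaa t).
pose W2 := limn (fun n => \sum_(1 <= t < n) etaw t ^+ 2).
have hWA n : \sum_(1 <= t < n) etaa t <= WA.
  by apply: ps_le_lim => // t t1; exact: ltW (ea0 t t1).
have hW2 n : \sum_(1 <= t < n) etaw t ^+ 2 <= W2.
  by apply: ps_le_lim => // t t1; exact: sqr_ge0.
have WA0 : 0 <= WA by apply: le_trans (hWA 0%N); rewrite big_geq.
have W20 : 0 <= W2 by apply: le_trans (hW2 0%N); rewrite big_geq.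
have K20 : 0 <= K2.
  rewrite /K2; apply: addr_ge0; apply: mulr_ge0; try apply: mulr_ge0; try exact: sqr_ge0; try exact: ltW; done.
have K30 : 0 <= K3 by rewrite /K3; nra.
pose b t := enorm (gradw F (z t)).
have P n : (1 - xi) * \sum_(1 <= t < n.+1) etaw t * b t ^+ 2 <=
    F (z 1%N) - F (z n.+1) + K2 * \sum_(1 <= t < n.+1) etaw t ^+ 2
    + K3 * \sum_(1 <= t < n.+1) etaa t.
  elim: n => [|n IH]; first by rewrite !big_geq // !mulr0 subrr !addr0.
  rewrite (big_nat_recr n.+1) // (big_nat_recr n.+1) // (big_nat_recr n.+1) //=.
  have [_ h2] := hs n.+1 isT.
  rewrite /b; move: IH; rewrite /b; lra.
pose C := (2 * M + K2 * W2 + K3 * WA) / (1 - xi).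
apply: (@seq_lemma R etaw b (L * (2 * D) + 1) C).
- by have := ltW L0; nra.
- exact: ew0.
- by move=> t; exact: enorm_ge0.
- exact: dW.
- move=> n; have x10 : 0 < 1 - xi by lra.
  case: n => [|n].
    rewrite big_geq // /C; apply: divr_ge0; last exact: ltW.
    have := mulr_ge0 K20 W20; have := mulr_ge0 K30 WA0; lra.
  rewrite /C ler_pdivlMr // mulrC.
  apply: le_trans (P n) _.
  have := (bF (z 1%N)).1; have := (bF (z n.+1)).1.
  rewrite !ler_norml => /andP [h1 h2] /andP [h3 h4].
  have := ler_wpM2l K20 (hW2 n.+1); have := ler_wpM2l K30 (hWA n.+1).
  lra.
- move=> t t1; have [h1 _] := hs t t1.
  apply: le_trans; first exact: enormB_rev.
  rewrite /gradw -linearB /=.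
  apply: le_trans; first exact: enorm_lsub.
  have [_ lF] := hF; apply: le_trans; first exact: lF.
  have et := ltW (ew0 t t1).
  apply: le_trans (ler_wpM2l (ltW L0) h1) _.
  nra.
Qed.
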